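(* Let $\alpha\in\{1/2,-1/2\}$, $\nu_1>0$ and $x'>0$ be fixed, let $s=s(N)\in\mathbb Z_{\ge0}$ satisfy $s\sim N^{1/4}\nu_1$, and let $x=N^{-1/2}x'-1$ (which lies in $[-1,1]$ for large $N$). Then as $N\to\infty$, $$N^{-1/4}(-1)^sJ_{s,\alpha}(x)\sim\frac{\sin[\nu_1\sqrt{2x'}]}{2^\alpha\sqrt{x'}}.$$
   Context: $J_{k,1/2}$ and $J_{k,-1/2}$ ($k\ge0$) are defined by $J_{0,1/2}=1$, $J_{1,1/2}(x)=2x$, $J_{0,-1/2}=1$, $J_{1,-1/2}(x)=2x-1$, both satisfying $xp_k(x)=\frac12p_{k+1}(x)+\frac12p_{k-1}(x)$ for $k\ge1$; equivalently $J_{k,1/2}(\cos\theta)=\frac{\sin((k+1)\theta)}{\sin\theta}$ and $J_{k,-1/2}(\cos\theta)=\frac{\cos((k+1/2)\theta)}{\cos(\theta/2)}$. *)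

(* Defs.v *)
From Stdlib Require Import Reals.
From Coquelicot Require Import Coquelicot.
Open Scope R_scope.

(* Pairs (J_{k,a}(x), J_{k+1,a}(x)) computed by the three-term recurrence
   x p_k = 1/2 p_{k+1} + 1/2 p_{k-1}, i.e. p_{k+1} = 2 x p_k - p_{k-1},
   with J_{0,a} = 1 and J_{1,a}(x) = 2x + a - 1/2
   (so J_{1,1/2}(x) = 2x and J_{1,-1/2}(x) = 2x - 1). *)
Fixpoint Jpair (a x : R) (k : nat) : R * R :=
  match k with
  | O => (1, 2 * x + a - 1 / 2)
  | S k' => let (p, q) := Jpair a x k' in (q, 2 * x * q - p)
  end.

Definition J (k : nat) (a x : R) : R := fst (Jpair a x k).

(* Main.v *)
Require Import Defs.
From Stdlib Require Import Reals Lra.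
From Coquelicot Require Import Coquelicot.
Open Scope R_scope.

Lemma J0 a x : J 0 a x = 1.
Proof. reflexivity. Qed.
Lemma J1 a x : J 1 a x = 2 * x + a - 1/2.
Proof. reflexivity. Qed.
Lemma JSS a x k : J (S (S k)) a x = 2 * x * J (S k) a x - J k a x.
Proof.
  unfold J. simpl. destruct (Jpair a x k) as [p q]. simpl. reflexivity.
Qed.

Lemma Jclosed a phi c :
  sin (c * phi) * (-1) * J 1 a (- cos phi) = sin ((1 + c) * phi) ->
  forall k, sin (c * phi) * (-1) ^ k * J k a (- cos phi) = sin ((INR k + c) * phi).
Proof.
  intros H1.
  assert (forall k, sin (c * phi) * (-1) ^ k * J k a (- cos phi) = sin ((INR k + c) * phi)
     /\ sin (c * phi) * (-1) ^ (S k) * J (S k) a (- cos phi) = sin ((INR (S k) + c) * phi)).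
  { induction k as [|k [IH1 IH2]].
    - split.
      + rewrite J0. replace (INR 0 + c) with c by (simpl; ring). simpl pow. ring.
      + replace (INR 1 + c) with (1 + c) by (simpl; ring). rewrite <- H1. simpl pow. ring.
    - split; [exact IH2|].
      rewrite JSS.
      set (A := (INR k + 1 + c) * phi).
      replace ((INR (S (S k)) + c) * phi) with (A + phi) by (unfold A; rewrite !S_INR; ring).
      replace ((INR (S k) + c) * phi) with A in IH2 by (unfold A; rewrite !S_INR; ring).
      replace ((INR k + c) * phi) with (A - phi) in IH1 by (unfold A; ring).
      rewrite sin_plus. rewrite sin_minus in IH1.
      simpl pow in *. 
      transitivity (2 * cos phi * (sin (c * phi) * (-1 * (-1) ^ k) * J (S k) a (- cos phi))
                    - sin (c * phi) * (-1) ^ k * J k a (- cos phi)).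
      + ring.
      + rewrite IH1, IH2. ring. }
  intro k; apply H.
Qed.

Lemma Jbase a phi : (a = 1 / 2 \/ a = - (1 / 2)) ->
  let c := a / 2 + 3 / 4 in
  sin (c * phi) * (-1) * J 1 a (- cos phi) = sin ((1 + c) * phi).
Proof.
  intros [-> | ->] c; unfold c; rewrite J1.
  - replace ((1 + (1/2/2 + 3/4)) * phi) with (2 * phi) by field.
    replace ((1/2/2 + 3/4) * phi) with phi by field.
    rewrite sin_2a. ring.
  - set (h := phi / 2).
    replace phi with (2 * h) by (unfold h; field).
    replace ((-(1/2)/2 + 3/4) * (2 * h)) with h by field.
    replace ((1 + (-(1/2)/2 + 3/4)) * (2 * h)) with (2 * h + h) by field.
    rewrite sin_plus, sin_2a, cos_2a_cos.
    field.
Qed.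

Lemma u_lim : is_lim_seq (fun N => Rpower (INR N) (- (1 / 4))) 0.
Proof.
  assert (Hln : is_lim_seq (fun N => ln (INR N)) p_infty).
  { apply (is_lim_comp_seq ln INR p_infty p_infty is_lim_ln_p).
    - exists 0%nat. intros; discriminate.
    - exact is_lim_seq_INR. }
  assert (Hm : is_lim_seq (fun N => - (1 / 4) * ln (INR N)) m_infty).
  { pose proof (is_lim_seq_scal_l _ (- (1/4)) _ Hln) as H.
    replace (Rbar_mult (- (1 / 4)) p_infty) with m_infty in H; [exact H|].
    simpl. destruct (Rle_dec 0 (-(1/4))) as [h|h]. exfalso; lra. reflexivity. }
  apply (is_lim_comp_seq exp _ m_infty 0 is_lim_exp_m).
  - exists 0%nat. intros; discriminate.
  - exact Hm.
Qed.

Lemma sinc_seq (z : nat -> R) : is_lim_seq z 0 -> eventually (fun n => z n <> 0) ->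
  is_lim_seq (fun n => sin (z n) / z n) 1.
Proof.
  intros Hz Hne.
  apply (is_lim_comp_seq (fun x => sin x / x) z 0 1 is_lim_sinc_0); [|exact Hz].
  destruct Hne as [N HN]. exists N. intros n Hn E. apply (HN n Hn). injection E; auto.
Qed.

Theorem lemma6p3 (a nu1 x' : R) (s : nat -> nat) :
  (a = 1 / 2 \/ a = - (1 / 2)) ->
  0 < nu1 -> 0 < x' ->
  is_lim_seq (fun N => INR (s N) / (Rpower (INR N) (1 / 4) * nu1)) 1 ->
  is_lim_seq
    (fun N => Rpower (INR N) (- (1 / 4)) * (-1) ^ (s N)
              * J (s N) a (Rpower (INR N) (- (1 / 2)) * x' - 1))
    (sin (nu1 * sqrt (2 * x')) / (Rpower 2 a * sqrt x')).
Proof.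
  intros Ha Hnu Hx Hs.
  set (u := fun N => Rpower (INR N) (- (1 / 4))).
  assert (Hupos : forall N, 0 < u N) by (intro; unfold u, Rpower; apply exp_pos).
  assert (Hu2 : forall N, Rpower (INR N) (- (1 / 2)) = u N * u N).
  { intro; unfold u, Rpower; rewrite <- exp_plus; f_equal; field. }
  assert (Hu4 : forall N, Rpower (INR N) (1 / 4) = / u N).
  { intro; unfold u. rewrite Rpower_Ropp, Rinv_inv. reflexivity. }
  assert (Hu0 : is_lim_seq u 0) by exact u_lim.
  assert (Hsu : is_lim_seq (fun N => INR (s N) * u N) nu1).
  { pose proof (is_lim_seq_mult' _ _ _ _ Hs (is_lim_seq_const nu1)) as H.
    rewrite Rmult_1_l in H. revert H; apply is_lim_seq_ext. intro N.
    rewrite Hu4. specialize (Hupos N). field. split; lra. }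
  set (k := sqrt (x' / 2)).
  assert (Hk : 0 < k) by (apply sqrt_lt_R0; lra).
  assert (Hk2 : k * k = x' / 2) by (apply sqrt_sqrt; lra).
  set (v := fun N => u N * k).
  assert (Hv0 : is_lim_seq v 0).
  { pose proof (is_lim_seq_mult' _ _ _ _ Hu0 (is_lim_seq_const k)) as H.
    rewrite Rmult_0_l in H. exact H. }
  assert (Hvpos : forall N, 0 < v N) by (intro; unfold v; specialize (Hupos N); nra).
  set (y := fun N => asin (v N)).
  assert (Hy0 : is_lim_seq y 0).
  { pose proof (is_lim_seq_continuous asin v 0) as H.
    rewrite asin_0 in H. apply H; [|exact Hv0].
    apply derivable_continuous_pt, derivable_pt_asin. lra. }
  assert (HN0 : exists N0, forall N, (N0 <= N)%nat -> v N < 1 / 2).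
  { apply is_lim_seq_spec in Hv0.
    destruct (Hv0 (mkposreal (1/2) ltac:(lra))) as [N0 HN0].
    exists N0. intros N HN. specialize (HN0 N HN). simpl in HN0.
    rewrite Rminus_0_r in HN0. apply Rabs_lt_between in HN0. lra. }
  destruct HN0 as [N0 HN0].
  assert (Hsy : forall N, (N0 <= N)%nat -> sin (y N) = v N).
  { intros N HN. unfold y. apply sin_asin. specialize (HN0 N HN). specialize (Hvpos N). lra. }
  assert (Hyb : forall N, (N0 <= N)%nat -> 0 < y N < PI / 2).
  { intros N HN. specialize (HN0 N HN). specialize (Hvpos N).
    pose proof (asin_bound_lt (v N) ltac:(lra)) as Hb. fold (y N) in Hb.
    split; [|lra].
    destruct (Rlt_or_le 0 (y N)) as [h|h]; [exact h|].
    exfalso. pose proof (sin_incr_1 (y N) 0 ltac:(lra) ltac:(lra) ltac:(lra) ltac:(lra) h) as H.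
    rewrite sin_0, Hsy in H by exact HN. lra. }
  assert (Hyv : is_lim_seq (fun N => y N / v N) 1).
  { pose proof (sinc_seq y Hy0) as H.
    assert (H' : is_lim_seq (fun n => sin (y n) / y n) 1).
    { apply H. exists N0. intros N HN. specialize (Hyb N HN). lra. }
    pose proof (is_lim_seq_div' _ _ _ _ (is_lim_seq_const 1) H' ltac:(lra)) as H2.
    replace (1 / 1) with 1 in H2 by field.
    eapply is_lim_seq_ext_loc; [|exact H2].
    exists N0. intros N HN. rewrite (Hsy N HN). specialize (Hyb N HN). specialize (Hvpos N).
    rewrite <- (Hsy N HN). field. split; [|lra].
    rewrite (Hsy N HN); lra. }
  set (phi := fun N => 2 * y N).
  assert (Hs2 : 2 * k = sqrt (2 * x')).
  { replace (2 * x') with (4 * (x' / 2)) by field.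
    rewrite sqrt_mult by lra. f_equal.
    replace 4 with (2 * 2) by ring. rewrite sqrt_square; lra. }
  assert (Hphiu : is_lim_seq (fun N => phi N / u N) (sqrt (2 * x'))).
  { pose proof (is_lim_seq_scal_l _ (2 * k) _ Hyv) as H.
    simpl in H. rewrite Rmult_1_r, Hs2 in H. revert H. apply is_lim_seq_ext.
    intro N. unfold phi, v. specialize (Hupos N). simpl. rewrite <- Hs2. field. lra. }
  assert (Hphi0 : is_lim_seq phi 0).
  { pose proof (is_lim_seq_scal_l _ 2 _ Hy0) as H. simpl in H.
    rewrite Rmult_0_r in H. exact H. }
  set (c := a / 2 + 3 / 4).
  assert (Hc : c = 1 \/ c = 1 / 2) by (unfold c; destruct Ha as [-> | ->]; [left|right]; field).
  assert (Hnum : is_lim_seq (fun N => (INR (s N) + c) * phi N) (nu1 * sqrt (2 * x'))).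
  { pose proof (is_lim_seq_plus' _ _ _ _ (is_lim_seq_mult' _ _ _ _ Hsu Hphiu)
        (is_lim_seq_scal_l _ c _ Hphi0)) as H.
    simpl in H. rewrite Rmult_0_r, Rplus_0_r in H. revert H. apply is_lim_seq_ext.
    intro N. specialize (Hupos N). field. lra. }
  assert (Hden : is_lim_seq (fun N => sin (c * phi N) / u N) (c * sqrt (2 * x'))).
  { assert (Hz : is_lim_seq (fun N => c * phi N) 0).
    { pose proof (is_lim_seq_scal_l _ c _ Hphi0) as H. simpl in H.
      rewrite Rmult_0_r in H. exact H. }
    pose proof (sinc_seq _ Hz) as H.
    assert (H' : is_lim_seq (fun n => sin (c * phi n) / (c * phi n)) 1).
    { apply H. exists N0. intros N HN. specialize (Hyb N HN). unfold phi.
      destruct Hc as [-> | ->]; nra. }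
    pose proof (is_lim_seq_mult' _ _ _ _ H' (is_lim_seq_scal_l _ c _ Hphiu)) as H2.
    simpl in H2. rewrite Rmult_1_l in H2.
    eapply is_lim_seq_ext_loc; [|exact H2].
    exists N0. intros N HN. specialize (Hyb N HN). specialize (Hupos N). unfold phi.
    field. split; [lra|]. destruct Hc as [-> | ->]; lra. }
  assert (Hsq : 0 < sqrt (2 * x')) by (apply sqrt_lt_R0; lra).
  assert (Hcpos : 0 < c) by (destruct Hc as [-> | ->]; lra).
  pose proof (is_lim_seq_div' _ _ _ _ (is_lim_seq_continuous sin _ _ (continuity_sin _) Hnum) Hden
     ltac:(nra)) as Hfin.
  replace (Rpower 2 a * sqrt x') with (c * sqrt (2 * x')).
  2: { rewrite sqrt_mult by lra. unfold c.
       assert (H2 : sqrt 2 * sqrt 2 = 2) by (apply sqrt_sqrt; lra).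
       assert (H2p : 0 < sqrt 2) by (apply sqrt_lt_R0; lra).
       destruct Ha as [-> | ->].
       - replace (1 / 2) with (/ 2) by field. rewrite Rpower_sqrt by lra. field.
       - rewrite Rpower_Ropp. replace (1 / 2) with (/ 2) by field.
         rewrite Rpower_sqrt by lra.
         assert (Hi : / sqrt 2 = sqrt 2 / 2).
         { apply Rmult_eq_reg_l with (sqrt 2); [|lra].
           rewrite Rinv_r by lra. unfold Rdiv. rewrite <- Rmult_assoc, H2. field. }
         rewrite Hi. field. }
  eapply is_lim_seq_ext_loc; [|exact Hfin].
  exists N0. intros N HN. specialize (Hyb N HN). specialize (Hupos N).
  assert (Harg : Rpower (INR N) (- (1 / 2)) * x' - 1 = - cos (phi N)).
  { rewrite Hu2. unfold phi. rewrite cos_2a_sin, (Hsy N HN). unfold v.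
    replace x' with (2 * (k * k)) at 1 by lra. ring. }
  rewrite Harg. fold (u N).
  assert (Hsc : 0 < sin (c * phi N)).
  { apply sin_gt_0; unfold phi; destruct Hc as [-> | ->]; nra. }
  pose proof (Jclosed a (phi N) c (Jbase a (phi N) Ha) (s N)) as HJ.
  rewrite <- HJ. field. lra.
Qed.
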